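(* There is some $d_0$ such that the following holds for every $d\geq d_0$. Let $G$ be a finite bipartite graph with vertex classes $A$ and $B$ such that $|A|\geq |B|$, $d_G(x,y)\leq d^{1/5}$ for all distinct $x,y\in B$, $d_G(x)\leq d$ for every $x\in A$, and $d(G)\geq d^{3/4}$. Then $G$ contains a $C_4$-free subgraph with average degree at least $d^{1/4}$.
   Context: $d(G)=2e(G)/|V(G)|$ is the average degree; $d_G(x)$ is the degree of $x$; the codegree $d_G(x,y)$ is the number of common neighbours of $x$ and $y$ in $G$. A graph is $C_4$-free if it contains no $4$-cycle as a subgraph. *)

(* Defs.v *)
From HB Require Import structures.
From mathcomp Require Import all_boot all_order all_algebra.
From mathcomp Require Import all_classical all_reals all_analysis.
Set Implicit Arguments. Unset Strict Implicit. Unset Printing Implicit Defensive.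
Import Order.TTheory GRing.Theory Num.Theory.

Definition simple_graph (T : finType) (adj : rel T) : Prop :=
  symmetric adj /\ irreflexive adj.

Definition bipartite_with (T : finType) (adj : rel T) (A B : {set T}) : Prop :=
  A :&: B = finset.set0 /\ A :|: B = [set: T] /\
  (forall x y, adj x y -> (x \in A) && (y \in B) || (x \in B) && (y \in A)).

Definition deg (T : finType) (adj : rel T) (x : T) : nat :=
  #|[set z | adj x z]|.

Definition codeg (T : finType) (adj : rel T) (x y : T) : nat :=
  #|[set z | adj x z && adj y z]|.

(* Average degree 2 e(H) / |V(H)| of the graph with vertex set S and
   adjacency relation adj (edges assumed inside S); 2 e(H) is the number of
   ordered adjacent pairs. Equals 0 when S is empty. *)
Definition avg_deg (R : realType) (T : finType) (S : {set T}) (adj : rel T) : R :=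
  (#|[set p : T * T | adj p.1 p.2]|%:R / #|S|%:R)%R.

Definition subgraph (T : finType) (adj : rel T) (S : {set T}) (F : rel T) : Prop :=
  symmetric F /\ (forall x y, F x y -> [&& adj x y, x \in S & y \in S]).

Definition C4_free (T : finType) (F : rel T) : Prop :=
  forall a b c d : T, uniq [:: a; b; c; d] ->
    ~ [&& F a b, F b c, F c d & F d a].

(* Main.v *)
Require Import Defs.
From HB Require Import structures.
From mathcomp Require Import all_boot all_order all_algebra.
From mathcomp Require Import all_classical all_reals all_analysis.
From mathcomp Require Import ring lra.
Import Order.TTheory GRing.Theory Num.Theory.
Local Open Scope ring_scope.
Set Implicit Arguments. Unset Strict Implicit. Unset Printing Implicit Defensive.
Section Weights.
Variables (R : realType) (K : finType) (p : R).
Definition wt (f : {ffun K -> bool}) : R := \prod_(e : K) (if f e then p else 1 - p).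

Lemma sum_wt_prod (Q : {set K}) :
  \sum_(f : {ffun K -> bool}) wt f * \prod_(e in Q) ((f e)%:R : R) = p ^+ #|Q|.
Proof.
rewrite -prodr_const.
transitivity (\sum_(f : {ffun K -> bool}) \prod_(e : K) ((if f e then p else 1 - p) * (if e \in Q then ((f e)%:R : R) else 1))).
  apply: eq_bigr => f _; rewrite /wt [X in _ * X]big_mkcond -big_split /=.
  by [].
rewrite -(bigA_distr_bigA (fun (e : K) (j : bool) => (if j then p else 1 - p) * (if e \in Q then (j%:R : R) else 1))).
rewrite [RHS]big_mkcond /=; apply: eq_bigr => e _.
rewrite big_bool /=; case: (e \in Q) => /=; rewrite ?mulr1 ?mulr0 ?addr0 //.
by rewrite addrC subrK.
Qed.

Lemma sum_wt : \sum_(f : {ffun K -> bool}) wt f = 1.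
Proof.
have := sum_wt_prod finset.set0; rewrite cards0 expr0 => <-.
by apply: eq_bigr => f _; rewrite big_set0 mulr1.
Qed.

Lemma wt_ge0 : 0 <= p <= 1 -> forall f, 0 <= wt f.
Proof.
move=> /andP[p0 p1] f; apply: prodr_ge0 => e _; case: (f e) => //.
by rewrite subr_ge0.
Qed.

Lemma exists_ge_avg (V : {ffun K -> bool} -> R) : 0 <= p <= 1 ->
  exists f, \sum_(g : {ffun K -> bool}) wt g * V g <= V f.
Proof.
move=> hp; set f0 : {ffun K -> bool} := [ffun=> false].
case: (@arg_maxP _ _ _ f0 predT V isT) => f _ Hf.
exists f; apply: le_trans (_ : \sum_g wt g * V f <= _).
  apply: ler_sum => g _; apply: ler_wpM2l; first exact: wt_ge0.
  exact: Hf.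
by rewrite -big_distrl /= sum_wt mul1r.
Qed.
End Weights.
Section Del.
Variable T : finType.
Definition C4t (X : {set T * T}) (t : (T * T) * (T * T)) : bool :=
 [&& t.1.1 != t.2.1, t.1.2 != t.2.2 & [&& (t.1.1, t.1.2) \in X, (t.1.1, t.2.2) \in X,
     (t.2.1, t.1.2) \in X & (t.2.1, t.2.2) \in X]].
Definition tup X := #|[set t | C4t X t]|.

Lemma C4t_mono (X Y : {set T * T}) t : X \subset Y -> C4t X t -> C4t Y t.
Proof.
move=> /fintype.subsetP s /and3P[h1 h2 /and4P[h3 h4 h5 h6]].
by apply/and3P; split => //; apply/and4P; split; apply: s.
Qed.

Lemma tup_mono (X Y : {set T * T}) : X \subset Y -> (tup X <= tup Y)%N.
Proof.
move=> s; apply: subset_leq_card; apply/fintype.subsetP => t; rewrite !inE; exact: C4t_mono.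
Qed.

Lemma deletion n (X : {set T * T}) : (tup X <= n)%N ->
  exists X' : {set T * T}, [/\ X' \subset X, tup X' = 0%N & (#|X| <= #|X'| + tup X)%N].
Proof.
elim: n X => [|n IH] X hX.
  exists X; split => //; [by apply/eqP; rewrite -leqn0 | by rewrite leq_addr].
case: (posnP (tup X)) => [h0|hpos].
  by exists X; split => //; rewrite leq_addr.
have [t] : exists t, t \in [set t | C4t X t].
  by apply/set0Pn; rewrite -card_gt0.
rewrite inE => ht.
set e := (t.1.1, t.1.2).
have eX : e \in X by case/and3P: ht => _ _ /and4P[].
set Y := X :\ e.
have sYX : Y \subset X by apply: subsetDl.
have ltY : (tup Y < tup X)%N.
  apply: proper_card; apply/properP; split.
    by apply/fintype.subsetP => u; rewrite !inE; apply: C4t_mono.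
  exists t; rewrite !inE //.
  by apply/negP => /and3P[_ _ /and4P[]]; rewrite !inE /e eqxx.
have hY : (tup Y <= n)%N by rewrite -ltnS (leq_trans ltY hX).
have [X' [s1 s2 s3]] := IH Y hY.
exists X'; split => //; first by apply: fintype.subset_trans sYX.
have cX : #|X| = (#|Y| + 1)%N by rewrite (cardsD1 e X) eX addnC.
rewrite cX; apply: leq_trans (leq_add s3 (leqnn 1)) _.
by rewrite -addnA leq_add2l addn1.
Qed.
End Del.

Section Expect.
Variables (R : realType) (T : finType) (p : R) (E : {set T * T}).
Definition Xf (f : {ffun T * T -> bool}) : {set T * T} := [set e in E | f e].
Definition Qseq (t : (T * T) * (T * T)) : seq (T * T) :=
  [:: (t.1.1, t.1.2); (t.1.1, t.2.2); (t.2.1, t.1.2); (t.2.1, t.2.2)].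
Definition Qs t : {set T * T} := [set x in Qseq t].

Lemma Qseq_uniq t : C4t E t -> uniq (Qseq t).
Proof.
case/and3P => h1 h2 _.
by rewrite /= !inE !xpair_eqE (negbTE h1) (negbTE h2) /= !andbF.
Qed.

Lemma card_Qs t : C4t E t -> #|Qs t| = 4%N.
Proof. by move=> h; rewrite cardsE; apply/card_uniqP/Qseq_uniq. Qed.

Lemma card_Xf f : (#|Xf f|%:R : R) = \sum_(e in E) ((f e)%:R).
Proof.
rewrite -[LHS]mulr1n -sumr_const big_mkcond [RHS]big_mkcond /=.
by apply: eq_bigr => e _; rewrite !inE; case: (e \in E); case: (f e).
Qed.

Lemma tup_Xf f : ((tup (Xf f))%:R : R) =
  \sum_(t in [set t | C4t E t]) \prod_(e in Qs t) ((f e)%:R : R).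
Proof.
rewrite /tup -[LHS]mulr1n -sumr_const big_mkcond [RHS]big_mkcond /=.
apply: eq_bigr => t _; rewrite !inE.
case hE: (C4t E t); last first.
  case hX: (C4t (Xf f) t) => //.
  have : C4t E t by apply: C4t_mono hX; apply/fintype.subsetP => e; rewrite inE => /andP[].
  by rewrite hE.
rewrite (eq_bigl (fun e => e \in Qseq t)); last by move=> e; rewrite inE.
rewrite -big_uniq; last exact: Qseq_uniq.
rewrite /Qseq !big_cons big_nil.
case/and3P: hE => h1 h2 /and4P[m1 m2 m3 m4].
rewrite /C4t !inE h1 h2 m1 m2 m3 m4 /=.
by case: (f (t.1.1, t.1.2)); case: (f (t.1.1, t.2.2)); case: (f (t.2.1, t.1.2));
   case: (f (t.2.1, t.2.2)); rewrite /= ?mul1r ?mul0r ?mulr0.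
Qed.

Lemma exp_card : \sum_f wt p f * (#|Xf f|%:R : R) = p * #|E|%:R.
Proof.
under eq_bigr => f _ do rewrite card_Xf big_distrr /=.
rewrite exchange_big /=.
under eq_bigr => e _.
  have -> : \sum_(f : {ffun T * T -> bool}) wt p f * (f e)%:R =
            \sum_(f : {ffun T * T -> bool}) wt p f * \prod_(e' in [set e]) ((f e')%:R : R).
    by apply: eq_bigr => f _; rewrite big_set1.
  rewrite sum_wt_prod cards1 expr1.
  over.
by rewrite sumr_const mulr_natr.
Qed.

Lemma exp_tup : \sum_f wt p f * ((tup (Xf f))%:R : R) = p ^+ 4 * (tup E)%:R.
Proof.
under eq_bigr => f _ do rewrite tup_Xf big_distrr /=.
rewrite exchange_big /=.
rewrite (eq_bigr (fun _ => p ^+ 4)); last first.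
  move=> t; rewrite inE => ht; rewrite sum_wt_prod card_Qs //.
by rewrite sumr_const mulr_natr /tup.
Qed.
End Expect.


Lemma sum_ind (R : realType) (I : finType) (P : pred I) :
  \sum_(i : I) ((P i)%:R : R) = (#|[set i | P i]|)%:R.
Proof.
rewrite -[RHS]mulr1n -sumr_const [RHS]big_mkcond /=.
by apply: eq_bigr => i _; rewrite inE; case: (P i).
Qed.

Section Graph.
Variables (R : realType) (T : finType) (adj : rel T) (A B : {set T}).
Hypotheses (Hs : simple_graph adj) (Hb : bipartite_with adj A B).
Definition Ed : {set T * T} := [set e | (e.1 \in A) && adj e.1 e.2].

Lemma AnotB x : x \in A -> x \in B -> False.
Proof.
case: Hb => hAB _ xA xB.
have : x \in A :&: B by rewrite inE xA xB.
by rewrite hAB inE.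
Qed.

Lemma adjAB x y : x \in A -> adj x y -> y \in B.
Proof.
case: Hb => _ [_ hE] xA /hE /orP[/andP[_ //]|/andP[xB _]].
by case: (AnotB xA xB).
Qed.

Lemma adjBA x y : x \in B -> adj x y -> y \in A.
Proof.
case: Hb => _ [_ hE] xB /hE /orP[/andP[xA _]|/andP[_ //]].
by case: (AnotB xA xB).
Qed.

Lemma AorB x : (x \in A) || (x \in B).
Proof.
case: Hb => _ [hU _].
have : x \in A :|: B by rewrite hU inE.
by rewrite inE.
Qed.

Lemma pairs_le : (#|[set q : T * T | adj q.1 q.2]| <= 2 * #|Ed|)%N.
Proof.
set sw := fun q : T * T => (q.2, q.1).
have swK : cancel sw sw by case.
have sub : [set q : T * T | adj q.1 q.2] \subset Ed :|: [set sw q | q in Ed].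
  apply/fintype.subsetP => [[x y]]; rewrite !inE /= => hxy.
  case/orP: (AorB x) => hx.
    by rewrite hx hxy.
  apply/orP; right.
  have -> : (x, y) = sw (y, x) by [].
  apply: imset_f; rewrite inE /= (adjBA hx hxy) /=.
  by case: Hs => sy _; rewrite sy.
apply: leq_trans (subset_leq_card sub) _.
rewrite cardsU card_imset; last exact: can_inj swK.
by rewrite mul2n -addnn leq_subr.
Qed.

Lemma tup_bound (q D : R) : 0 <= q ->
  (forall x y, x \in B -> y \in B -> x != y -> (codeg adj x y)%:R <= q) ->
  (forall x, x \in A -> (deg adj x)%:R <= D) ->
  ((tup Ed)%:R : R) <= D * q * #|Ed|%:R.
Proof.
move=> q0 Hc Hd.
have sy : symmetric adj by case: Hs.
have -> : ((tup Ed)%:R : R) = \sum_(u : T * T) \sum_(v : T * T) ((C4t Ed (u, v))%:R : R).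
  by rewrite pair_bigA /= sum_ind.
have -> : #|Ed|%:R = \sum_(u : T * T) (((u \in Ed))%:R : R).
  by rewrite sum_ind; apply: (congr1 (fun n : nat => (n%:R : R))); apply: eq_card => u; rewrite [in RHS]inE.
rewrite big_distrr /=; apply: ler_sum => -[a b] _.
case hu: ((a, b) \in Ed); last first.
  rewrite mulr0 big1 // => v _; rewrite /C4t /= hu.
  by rewrite !andbF.
move: hu; rewrite inE /= => /andP[aA ab].
have bB := adjAB aA ab.
rewrite mulr1.
rewrite -(pair_bigA _ (fun c dd => ((C4t Ed ((a, b), (c, dd)))%:R : R))) /= exchange_big /=.
apply: le_trans (_ : \sum_(dd : T) ((adj a dd)%:R * q) <= _).
  apply: ler_sum => dd _.
  case h: (((a, dd) \in Ed) && (dd != b)); last first.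
    rewrite big1; first by apply: mulr_ge0 => //; apply: ler0n.
    move=> c _; case hC: (C4t _ _) => //.
    by move: hC h => /and3P[_ bd /and4P[_ m2 _ _]]; rewrite m2 eq_sym bd.
  case/andP: h; rewrite inE /= => /andP[_ add] ddb.
  rewrite add mul1r.
  have ddB := adjAB aA add.
  have hbd : b != dd by rewrite eq_sym.
  apply: le_trans (Hc b dd bB ddB hbd).
  rewrite /codeg -sum_ind; apply: ler_sum => c _; rewrite ler_nat.
  case hC: (C4t Ed ((a, b), (c, dd))) => //=.
  move: hC => /and3P[_ _ /and4P[_ _ m3 m4]]; move: m3 m4; rewrite !inE /= => /andP[_ cb] /andP[_ cdd].
  by rewrite sy cb sy cdd.
rewrite -big_distrl /= sum_ind.
apply: ler_wpM2r => //.
apply: le_trans (Hd a aA); rewrite /deg.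
by rewrite ler_nat; apply: subset_leq_card; apply/fintype.subsetP => x; rewrite !inE.
Qed.
End Graph.
Lemma final_arith (R : realType) (r n e t X tX x Fp P : R) : 3 <= r -> 0 < n ->
  r ^+ 15 * n <= P -> P <= 2 * e -> t <= r ^+ 24 * e ->
  (2 * r ^+ 8)^-1 * e - ((2 * r ^+ 8)^-1) ^+ 4 * t <= X - tX ->
  X <= x + tX -> x <= Fp -> r ^+ 5 <= Fp / n.
Proof.
move=> r3 n0 h1 h2 h3 h4 h5 h6.
have r0 : 0 < r by lra.
set s := r ^+ 8.
have s0 : 0 < s by rewrite exprn_gt0.
set p := (2 * s)^-1.
have p0 : 0 < p by rewrite invr_gt0 mulr_gt0.
have key : p ^+ 4 * r ^+ 24 = p / 8.
  have -> : r ^+ 24 = s ^+ 3 by rewrite /s -exprM.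
  rewrite /p; field; rewrite lt0r_neq0 //.
have hpt : p ^+ 4 * t <= p / 8 * e.
  rewrite -key -mulrA; apply: ler_wpM2l => //; exact: exprn_ge0 (ltW p0).
set u := r ^+ 13 * n.
have u0 : 0 <= u by rewrite mulr_ge0 // ?exprn_ge0 // ltW.
have r2 : 9 <= r ^+ 2 by rewrite expr2; nra.
have hu : r ^+ 15 * n = r ^+ 2 * u by rewrite /u mulrA -exprD.
have h9 : 9 * u <= 2 * e.
  apply: le_trans h2; apply: le_trans h1; rewrite hu; apply: ler_wpM2r => //.
have hr5 : r ^+ 5 * n = 2 * p * u.
  rewrite /u /p (_ : 13 = 8 + 5)%N // exprD -/s; field; rewrite lt0r_neq0 //.
rewrite ler_pdivlMr // hr5.
have : 2 * p * u <= 7 / 8 * p * e.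
  have : 0 <= p * (7 / 8 * e - 2 * u).
    apply: mulr_ge0; [exact: ltW | lra].
  lra.
have h4' : p * e - p ^+ 4 * t <= X - tX by exact: h4.
lra.
Qed.

Unset Implicit Arguments.
Theorem lemma6 (R : realType) :
  exists d0 : R, forall d : R, d0 <= d ->
  forall (T : finType) (adj : rel T) (A B : {set T}),
    simple_graph adj ->
    bipartite_with adj A B ->
    (#|B| <= #|A|)%N ->
    (forall x y, x \in B -> y \in B -> x != y -> (codeg adj x y)%:R <= d `^ (1/5)) ->
    (forall x, x \in A -> (deg adj x)%:R <= d) ->
    d `^ (3/4) <= avg_deg R [set: T] adj ->
    exists (S : {set T}) (F : rel T),
      subgraph adj S F /\ C4_free F /\ d `^ (1/4) <= avg_deg R S F.
Proof.
exists (3 ^+ 20) => d hd T adj A B Hs Hb _ Hc Hd Havg.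
have d0 : 0 < d by apply: lt_le_trans hd; rewrite exprn_gt0.
set r := d `^ (1/20).
have r0 : 0 <= r := powR_ge0 _ _.
have pw : forall k : nat, d `^ (1/20 * k%:R) = r ^+ k.
  by move=> k; rewrite powRrM powR_mulrn.
have e15 : d `^ (3/4) = r ^+ 15 by rewrite -pw; congr (_ `^ _); field.
have e4 : d `^ (1/5) = r ^+ 4 by rewrite -pw; congr (_ `^ _); field.
have e5 : d `^ (1/4) = r ^+ 5 by rewrite -pw; congr (_ `^ _); field.
have e20 : d = r ^+ 20 by rewrite -pw (_ : 1/20 * 20%:R = 1) ?powRr1 ?ltW //; field.
have r3 : 3 <= r.
  rewrite leNgt; apply/negP => hr.
  have := ltrXn2r 20 r0 hr; rewrite /= => h.
  by move: hd; rewrite {1}e20 leNgt h.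
rewrite e5; rewrite e15 in Havg; rewrite e4 in Hc.
set E := Ed adj A.
set p : R := (2 * r ^+ 8)^-1.
have hp : 0 <= p <= 1.
  have s1 : 1 <= r ^+ 8 by rewrite exprn_ege1 //; lra.
  apply/andP; split; first by rewrite invr_ge0; lra.
  rewrite invf_le1; lra.
have [f hf] := exists_ge_avg (K := (T * T)%type)
  (fun f => (#|Xf E f|%:R : R) - (tup (Xf E f))%:R) hp.
rewrite (eq_bigr (fun g => wt p g * #|Xf E g|%:R - wt p g * (tup (Xf E g))%:R)) in hf;
  last by move=> g _; rewrite mulrBr.
rewrite sumrB exp_card exp_tup in hf.
have [X' [s1 s2 s3]] := deletion (leqnn (tup (Xf E f))).
have XE : forall u, u \in X' -> u \in E.
  move=> u /(fintype.subsetP s1); rewrite inE => /andP[] //.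
have sy : symmetric adj by case: Hs.
set F : rel T := fun x y => ((x, y) \in X') || ((y, x) \in X').
have FA : forall x y, x \in A -> F x y -> ((x, y) \in X') && (y \in B).
  move=> x y xA /orP[h|h].
    by rewrite h; move: (XE _ h); rewrite inE /= => /andP[_ /(adjAB Hb xA)].
  move: (XE _ h); rewrite inE /= => /andP[yA /(adjAB Hb yA) xB].
  by case: (AnotB Hb xA xB).
have FB : forall x y, x \in B -> F x y -> ((y, x) \in X') && (y \in A).
  move=> x y xB /orP[h|h].
    move: (XE _ h); rewrite inE /= => /andP[xA _].
    by case: (AnotB Hb xA xB).
  by rewrite h; move: (XE _ h); rewrite inE /= => /andP[].
exists [set: T], F; split; [|split].
- split; first by move=> x y; rewrite /F orbC.
  move=> x y /orP[h|h]; rewrite !inE !andbT.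
    by move: (XE _ h); rewrite inE /= => /andP[].
  by move: (XE _ h); rewrite inE /= => /andP[_]; rewrite sy.
- move=> a b c dd Hu /and4P[fab fbc fcd fda].
  have hac : a != c by move: Hu; rewrite /= !inE => /and4P[/norP[_ /norP[h _]] _ _ _].
  have hbd : b != dd by move: Hu; rewrite /= !inE => /and4P[_ /norP[_ h] _ _].
  suff : exists t, C4t X' t.
    case=> t ht.
    have : (0 < tup X')%N by rewrite card_gt0; apply/set0Pn; exists t; rewrite inE.
    by rewrite s2.
  case/orP: (AorB Hb a) => aX.
    case/andP: (FA _ _ aX fab) => m1 bB.
    case/andP: (FB _ _ bB fbc) => m3 cA.
    case/andP: (FA _ _ cA fcd) => m4 dB.
    case/andP: (FB _ _ dB fda) => m2 _.
    by exists ((a, b), (c, dd)); rewrite /C4t /= hac hbd m1 m2 m3 m4.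
  case/andP: (FB _ _ aX fab) => m1 bA.
  case/andP: (FA _ _ bA fbc) => m2 cB.
  case/andP: (FB _ _ cB fcd) => m4 dA.
  case/andP: (FA _ _ dA fda) => m3 _.
  exists ((b, a), (dd, c)); rewrite /C4t /= m1 m2 m3 m4.
  by rewrite hbd hac.
- rewrite /avg_deg.
  have n0 : 0 < (#|[set: T]|%:R : R).
    rewrite lt0r ler0n andbT; apply/negP => /eqP h0.
    move: Havg; rewrite /avg_deg h0 invr0 mulr0 leNgt exprn_gt0 //; lra.
  have hP := pairs_le Hs Hb.
  have hD : forall x, x \in A -> (deg adj x)%:R <= r ^+ 20 by move=> x xA; rewrite -e20; exact: Hd.
  have ht := tup_bound Hs Hb (exprn_ge0 4 r0) Hc hD.
  rewrite -exprD in ht.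
  have h1 := Havg; rewrite /avg_deg ler_pdivlMr // in h1.
  have h2 : (#|[set q : T * T | adj q.1 q.2]|%:R : R) <= 2 * #|E|%:R.
    by rewrite -natrM ler_nat.
  have h5 : (#|Xf E f|%:R : R) <= #|X'|%:R + (tup (Xf E f))%:R.
    by rewrite -natrD ler_nat.
  have h6 : (#|X'|%:R : R) <= #|[set q : T * T | F q.1 q.2]|%:R.
    rewrite ler_nat; apply: subset_leq_card; apply/fintype.subsetP => -[x y] h.
    by rewrite inE /F /= h.
  exact: (final_arith r3 n0 h1 h2 ht hf h5 h6).
Qed.
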